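(* Let $G,H$ be graphs with $H$ connected, let $b$ be a positive integer, and let $G^*$ be the $(H,b)$-core of $G$. If, in the $(1:b)$ Maker-Breaker vertex $H$-game (resp. the $(1:b)$ Client-Waiter vertex $H$-game), Breaker (resp. Waiter) has a winning strategy when the game is played on $G^*$, then Breaker (resp. Waiter) has a winning strategy when the game is played on $G$ (with the same player moving first).
   Context: Fix a graph $G$, a connected graph $H$ and a positive integer $b$. With respect to $G,H,b$: a bad vertex is a vertex of $G$ lying in no copy of $H$ in $G$; a bad edge is an edge of $G$ lying in no copy of $H$ in $G$; a bad set is a set $U\subseteq V(G)$ with $2\le|U|\le b+1$ such that no copy $\hat H$ of $H$ in $G$ satisfies $|V(\hat H)\cap U|=1$; a small component is a connected component of $G$ with at most $(b+1)(v(H)-1)$ vertices. A graph is $(H,b)$-stable if it contains no bad vertex, bad edge, bad set or small component (with respect to itself, $H$ and $b$). The $(H,b)$-core of $G$ is the union of all $(H,b)$-stable subgraphs of $G$. The $(1:b)$ Maker-Breaker vertex $H$-game on a graph: Maker claims one and Breaker $b$ previously unclaimed vertices per turn, alternately, until all are claimed; Maker wins iff the subgraph induced by his vertices contains a copy of $H$. The $(1:b)$ Client-Waiter vertex $H$-game: in each round Waiter offers $t$ free vertices with $1\le t\le b+1$, Client claims one and Waiter the rest; Client wins iff the subgraph induced by his vertices contains a copy of $H$, otherwise Waiter wins. *)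

(* Defs.v *)
From HB Require Import structures.
From mathcomp Require Import all_boot.
Set Implicit Arguments. Unset Strict Implicit. Unset Printing Implicit Defensive.

(* A finite graph on ground type T: a vertex set and a set of edges, each edge
   being a 2-element subset of the vertex set (see wf_graph). *)
Notation vgraph T := ({set T} * {set {set T}})%type.

Definition wf_graph (T : finType) (g : vgraph T) : bool :=
  [forall e in g.2, (#|e| == 2) && (e \subset g.1)].

Definition subgraph (T : finType) (g' g : vgraph T) : bool :=
  (g'.1 \subset g.1) && (g'.2 \subset g.2).

Definition is_copy (U T : finType) (eH : rel U) (g : vgraph T)
    (f : {ffun U -> T}) : bool :=
  [&& injectiveb f, [forall u, f u \in g.1]
    & [forall u, forall v, eH u v ==> ([set f u; f v] \in g.2)]].

Definition copy_vertices (U T : finType) (f : {ffun U -> T}) : {set T} :=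
  [set f u | u : U].

Definition has_copy (U T : finType) (eH : rel U) (g : vgraph T) : bool :=
  [exists f : {ffun U -> T}, is_copy eH g f].

Definition bad_vertex (U T : finType) (eH : rel U) (g : vgraph T) (x : T) :=
  (x \in g.1) &&
  ~~ [exists f : {ffun U -> T}, is_copy eH g f && (x \in copy_vertices f)].

Definition bad_edge (U T : finType) (eH : rel U) (g : vgraph T) (e : {set T}) :=
  (e \in g.2) &&
  ~~ [exists f : {ffun U -> T}, is_copy eH g f &&
        [exists u, exists v, eH u v && (e == [set f u; f v])]].

Definition bad_set (U T : finType) (eH : rel U) (b : nat) (g : vgraph T)
    (A : {set T}) :=
  [&& A \subset g.1, 2 <= #|A|, #|A| <= b.+1
    & ~~ [exists f : {ffun U -> T},
            is_copy eH g f && (#|copy_vertices f :&: A| == 1)]].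

Definition gadj (T : finType) (g : vgraph T) : rel T :=
  fun x y => [&& x \in g.1, y \in g.1 & [set x; y] \in g.2].

Definition component (T : finType) (g : vgraph T) (x : T) : {set T} :=
  [set y in g.1 | connect (gadj g) x y].

Definition in_small_component (U T : finType) (b : nat) (g : vgraph T) (x : T) :=
  (x \in g.1) && (#|component g x| <= b.+1 * (#|U| - 1)).

Definition stable (U T : finType) (eH : rel U) (b : nat) (g : vgraph T) : bool :=
  [&& wf_graph g,
      [forall x, ~~ bad_vertex eH g x],
      [forall e, ~~ bad_edge eH g e],
      [forall A, ~~ bad_set eH b g A]
    & [forall x, ~~ in_small_component U b g x]].

Definition core (U T : finType) (eH : rel U) (b : nat) (G : vgraph T) : vgraph T :=
  (\bigcup_(g : vgraph T | subgraph g G && stable eH b g) g.1,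
   \bigcup_(g : vgraph T | subgraph g G && stable eH b g) g.2).

Definition induced (T : finType) (g : vgraph T) (M : {set T}) : vgraph T :=
  (M :&: g.1, [set e in g.2 | e \subset M]).

Definition maker_wins (U T : finType) (eH : rel U) (g : vgraph T) (M : {set T}) :=
  has_copy eH (induced g M).

Definition free (T : finType) (g : vgraph T) (M B : {set T}) : {set T} :=
  g.1 :\: (M :|: B).

(* (1:b) Maker-Breaker vertex H-game on g; position = (Maker's set, Breaker's
   set). mb_bwin_maker_turn M B : Breaker has a winning strategy from this
   position with Maker to move; similarly for Breaker to move. When fewer than
   b vertices are free, Breaker claims all of them. *)
Inductive mb_bwin_maker_turn (U T : finType) (eH : rel U) (b : nat) (g : vgraph T)
  : {set T} -> {set T} -> Prop :=
| mbM_end (M B : {set T}) : free g M B = set0 -> ~~ maker_wins eH g M ->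
    mb_bwin_maker_turn eH b g M B
| mbM_move (M B : {set T}) : free g M B != set0 ->
    (forall x, x \in free g M B -> mb_bwin_breaker_turn eH b g (x |: M) B) ->
    mb_bwin_maker_turn eH b g M B
with mb_bwin_breaker_turn (U T : finType) (eH : rel U) (b : nat) (g : vgraph T)
  : {set T} -> {set T} -> Prop :=
| mbB_end (M B : {set T}) : free g M B = set0 -> ~~ maker_wins eH g M ->
    mb_bwin_breaker_turn eH b g M B
| mbB_move (M B C : {set T}) : free g M B != set0 -> C \subset free g M B ->
    #|C| = minn b #|free g M B| ->
    mb_bwin_maker_turn eH b g M (C :|: B) ->
    mb_bwin_breaker_turn eH b g M B.

(* (1:b) Client-Waiter vertex H-game on g; position = (Client's set, Waiter's
   set). cw_wwin C W : Waiter has a winning strategy from this position. *)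
Inductive cw_wwin (U T : finType) (eH : rel U) (b : nat) (g : vgraph T)
  : {set T} -> {set T} -> Prop :=
| cw_end (C W : {set T}) : free g C W = set0 -> ~~ maker_wins eH g C -> cw_wwin eH b g C W
| cw_move (C W O : {set T}) : O \subset free g C W -> 0 < #|O| <= b.+1 ->
    (forall x, x \in O -> cw_wwin eH b g (x |: C) (W :|: (O :\ x))) ->
    cw_wwin eH b g C W.

(* Main.v *)
Require Import Defs.
From HB Require Import structures.
From mathcomp Require Import all_boot zify.
Set Implicit Arguments. Unset Strict Implicit. Unset Printing Implicit Defensive.

Lemma copy_induced (U T : finType) (eH : rel U) (g : vgraph T) (M : {set T}) f :
  is_copy eH (induced g M) f -> is_copy eH g f /\ (forall u, f u \in M).
Proof.
case/and3P=> inj /forallP fin /forallP fe; split; last first.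
  by move=> u; have := fin u; rewrite /induced /= inE => /andP[].
apply/and3P; split=> //.
  by apply/forallP=> u; have := fin u; rewrite /induced /= inE => /andP[].
apply/forallP=> u; apply/forallP=> v; apply/implyP=> huv.
by have := forallP (fe u) v; rewrite huv /= inE => /andP[].
Qed.

Lemma maker_wins_mono (U T : finType) (eH : rel U) (g : vgraph T) (M M' : {set T}) :
  M \subset M' -> maker_wins eH g M -> maker_wins eH g M'.
Proof.
move=> sMM' /existsP[f /and3P[inj /forallP fin /forallP fe]].
apply/existsP; exists f; apply/and3P; split=> //.
  apply/forallP=> u; have := fin u; rewrite /induced /= !inE => /andP[h1 ->].
  by rewrite (subsetP sMM') .
apply/forallP=> u; apply/forallP=> v; apply/implyP=> huv.
have := forallP (fe u) v; rewrite huv /= !inE => /andP[-> h] /=.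
exact: subset_trans h sMM'.
Qed.

Lemma exists_card_sub (T : finType) (S : {set T}) n :
  n <= #|S| -> exists A : {set T}, (A \subset S) /\ #|A| = n.
Proof.
elim: n => [|n IH] hn; first by exists set0; rewrite sub0set cards0.
have [A [sAS cA]] := IH (ltnW hn).
have : A \proper S by rewrite properEcard sAS cA.
case/properP=> _ [x xS xA]; exists (x |: A); split.
  by rewrite subUset sub1set xS.
by rewrite cardsU1 xA cA.
Qed.

Lemma exists_extend (T : finType) (D F : {set T}) k :
  D \subset F -> #|D| <= k -> k <= #|F| ->
  exists C : {set T}, [/\ D \subset C, C \subset F & #|C| = k].
Proof.
move=> sDF hD hF.
have h : k - #|D| <= #|F :\: D| by rewrite cardsD (setIidPr sDF); lia.
have [A [sA cA]] := exists_card_sub h.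
exists (D :|: A); split; first exact: subsetUl.
  by rewrite subUset sDF (subset_trans sA) // subsetDl.
rewrite cardsU cA.
have -> : D :&: A = set0.
  apply/setP=> y; rewrite !inE; apply/negP=> /andP[yD yA].
  by have := subsetP sA y yA; rewrite inE yD.
rewrite cards0; lia.
Qed.


Lemma mbM_inv (U T : finType) (eH : rel U) b (g : vgraph T) (M B : {set T}) :
  mb_bwin_maker_turn eH b g M B ->
  (free g M B = set0 /\ ~~ maker_wins eH g M) \/
  (free g M B != set0 /\ forall x, x \in free g M B -> mb_bwin_breaker_turn eH b g (x |: M) B).
Proof. by case=> *; [left|right]. Qed.

Lemma mbB_inv (U T : finType) (eH : rel U) b (g : vgraph T) (M B : {set T}) :
  mb_bwin_breaker_turn eH b g M B ->
  (free g M B = set0 /\ ~~ maker_wins eH g M) \/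
  (exists C : {set T}, [/\ free g M B != set0, C \subset free g M B,
     #|C| = minn b #|free g M B| & mb_bwin_maker_turn eH b g M (C :|: B)]).
Proof. by case=> [? ? ? ?|? ? C ? ? ? ?]; [left|right; exists C]. Qed.

Scheme mbM_ind' := Induction for mb_bwin_maker_turn Sort Prop
with mbB_ind' := Induction for mb_bwin_breaker_turn Sort Prop.

Lemma mb_nowin (U T : finType) (eH : rel U) b (g : vgraph T) :
  (forall M B, mb_bwin_maker_turn eH b g M B -> ~~ maker_wins eH g M) /\
  (forall M B, mb_bwin_breaker_turn eH b g M B -> ~~ maker_wins eH g M).
Proof.
split.
- apply: (@mbM_ind' U T eH b g (fun M B _ => ~~ maker_wins eH g M)
                             (fun M B _ => ~~ maker_wins eH g M)) => //.
  move=> M B hf _ IH; case/set0Pn: hf => x hx.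
  apply: contra (IH x hx); apply: maker_wins_mono; exact: subsetUr.
- apply: (@mbB_ind' U T eH b g (fun M B _ => ~~ maker_wins eH g M)
                             (fun M B _ => ~~ maker_wins eH g M)) => //.
  move=> M B hf _ IH; case/set0Pn: hf => x hx.
  apply: contra (IH x hx); apply: maker_wins_mono; exact: subsetUr.
Qed.

Lemma free_shrinkM (T : finType) (g : vgraph T) (M B : {set T}) x :
  x \in free g M B -> #|free g (x |: M) B| < #|free g M B|.
Proof.
move=> hx; apply: proper_card; apply/properP; split.
  apply/subsetP=> y; rewrite !inE; case/andP=> /norP[/norP[_ h1] h2] ->.
  by rewrite (negbTE h1) (negbTE h2).
by exists x => //; rewrite !inE eqxx.
Qed.

Lemma free_shrinkB (T : finType) (g : vgraph T) (M B C : {set T}) :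
  C \subset free g M B -> C != set0 -> #|free g M (C :|: B)| < #|free g M B|.
Proof.
move=> sC /set0Pn[x hx]; apply: proper_card; apply/properP; split.
  apply/subsetP=> y; rewrite !inE; case/andP=> hn ->; rewrite andbT; move: hn.
  by case: (y \in M); case: (y \in C); case: (y \in B).
by exists x; [exact: subsetP sC x hx | rewrite !inE hx orbT].
Qed.


Lemma mb_sim (U T : finType) (eH : rel U) b (g g' : vgraph T)
  (Inv : {set T} -> {set T} -> Prop) :
  0 < b -> g'.1 \subset g.1 ->
  (forall M B B' : {set T}, Inv M B -> B \subset B' -> Inv M B') ->
  (forall (M B : {set T}) x, Inv M B -> x \in g'.1 -> Inv (x |: M) B) ->
  (forall (M B : {set T}) x, Inv M B -> x \in free g M B -> x \notin g'.1 ->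
     exists D : {set T}, [/\ D \subset free g (x |: M) B, #|D| <= b &
        forall B' : {set T}, D :|: B \subset B' -> Inv (x |: M) B']) ->
  (forall M B : {set T}, Inv M B -> ~~ maker_wins eH g' (M :&: g'.1) -> ~~ maker_wins eH g M) ->
  forall n (M B : {set T}), #|free g M B| < n ->
  [/\ forall Bs : {set T}, Inv M B -> Bs \subset B ->
        mb_bwin_maker_turn eH b g' (M :&: g'.1) Bs -> mb_bwin_maker_turn eH b g M B,
      forall Bs : {set T}, (forall B' : {set T}, B \subset B' -> Inv M B') -> Bs \subset B ->
        mb_bwin_breaker_turn eH b g' (M :&: g'.1) Bs -> mb_bwin_breaker_turn eH b g M B
    & forall Bs D : {set T}, D \subset free g M B -> #|D| <= b ->
        (forall B' : {set T}, D :|: B \subset B' -> Inv M B') -> Bs \subset B ->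
        mb_bwin_maker_turn eH b g' (M :&: g'.1) Bs -> mb_bwin_breaker_turn eH b g M B].
Proof.
move=> b0 sV invB invM invR tr; elim=> // n IH M B hn.
have [nwM nwB] := mb_nowin eH b g'.
have hstep : forall C' : {set T}, C' \subset free g M B -> #|C'| = minn b #|free g M B| ->
    free g M B != set0 -> #|free g M (C' :|: B)| < n.
  move=> C' sC' cC' fn0; have := free_shrinkB sC'.
  have -> : C' != set0.
    rewrite -card_gt0 cC' leq_min b0 card_gt0 //.
  move=> /(_ isT); lia.
split.
- move=> Bs hI sB hs.
  have [f0|fn0] := eqVneq (free g M B) set0.
    by apply: mbM_end => //; apply: tr hI (nwM _ _ hs).
  apply: mbM_move => // x hx.
  have hlt : #|free g (x |: M) B| < n by have := free_shrinkM hx; lia.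
  have [IHM IHB1 IHB2] := IH _ _ hlt.
  have hxMB : (x \notin M) && (x \notin B).
    by move: hx; rewrite !inE negb_or => /andP[].
  case/andP: hxMB => xM xB.
  case: (boolP (x \in g'.1)) => xV.
  + apply: (IHB1 Bs) => //.
      by move=> B' sB'; apply: invB (invM _ _ _ hI xV) sB'.
    have -> : (x |: M) :&: g'.1 = x |: (M :&: g'.1).
      by rewrite setIUl (setIidPl _) // sub1set.
    have xf : x \in free g' (M :&: g'.1) Bs.
      rewrite !inE xV andbT negb_or (negbTE xM) /=.
      by apply: contra xB; apply: (subsetP sB).
    case: (mbM_inv hs) => [[hf _]|[_ hm]]; last exact: hm.
    by rewrite hf inE in xf.
  + have [D [sD cD hD]] := invR _ _ _ hI hx xV.
    apply: (IHB2 Bs D) => //.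
    have -> : (x |: M) :&: g'.1 = M :&: g'.1.
      rewrite setIUl; have -> : [set x] :&: g'.1 = set0; last by rewrite set0U.
      apply/setP=> y; rewrite !inE; apply/negP=> /andP[/eqP -> ]; exact/negP.
    done.
- move=> Bs hI sB hs.
  have [f0|fn0] := eqVneq (free g M B) set0.
    by apply: mbB_end => //; apply: tr (hI _ (subxx _)) (nwB _ _ hs).
  case: (mbB_inv hs) => [[hf hnw] | [C [hf hC hcard hsim]]].
  + have [C' [_ sC' cC']] : exists C' : {set T}, [/\ set0 \subset C',
          C' \subset free g M B & #|C'| = minn b #|free g M B|].
      by apply: exists_extend; rewrite ?sub0set ?cards0 ?geq_minr.
    apply: (mbB_move (C:=C')) => //.
    have [IHM _ _] := IH _ _ (hstep _ sC' cC' fn0).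
    apply: (IHM Bs) => //; first by apply: hI; exact: subsetUr.
      exact: subset_trans sB (subsetUr _ _).
    exact: mbM_end.
  + have sCF : C :&: free g M B \subset free g M B by exact: subsetIr.
    have cCF : #|C :&: free g M B| <= minn b #|free g M B|.
      rewrite leq_min subset_leq_card ?subsetIr // andbT.
      apply: leq_trans (subset_leq_card (subsetIl _ _)) _; rewrite hcard; exact: geq_minl.
    have [C' [sDC' sC' cC']] := exists_extend sCF cCF (geq_minr _ _).
    apply: (mbB_move (C:=C')) => //.
    have [IHM _ _] := IH _ _ (hstep _ sC' cC' fn0).
    apply: (IHM (C :|: Bs)) => //; first by apply: hI; exact: subsetUr.
    rewrite subUset (subset_trans sB (subsetUr _ _)) andbT.
    apply/subsetP=> c cC; rewrite inE.
    case: (boolP (c \in free g M B)) => cF.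
      by rewrite (subsetP sDC') // inE cC cF.
    have cf' := subsetP hC c cC.
    have cg : c \in g.1 by apply: (subsetP sV); move: cf'; rewrite inE => /andP[].
    move: cF; rewrite inE cg andbT negbK inE => /orP[cM|->]; last by rewrite orbT.
    by move: cf'; rewrite !inE cM /=; case/andP => /norP[h _] h'; rewrite h' in h.
- move=> Bs D sD cD hD sB hs.
  have [f0|fn0] := eqVneq (free g M B) set0.
    apply: mbB_end => //; apply: tr (nwM _ _ hs); apply: hD.
    have -> : D = set0 by apply/eqP; rewrite -subset0 -f0.
    by rewrite set0U.
  have cDm : #|D| <= minn b #|free g M B| by rewrite leq_min cD subset_leq_card.
  have [C' [sDC' sC' cC']] := exists_extend sD cDm (geq_minr _ _).
  apply: (mbB_move (C:=C')) => //.
  have [IHM _ _] := IH _ _ (hstep _ sC' cC' fn0).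
  apply: (IHM Bs) => //; last exact: subset_trans sB (subsetUr _ _).
  by apply: hD; apply: setSU.
Qed.


Definition del (T : finType) (g : vgraph T) (X : {set T}) : vgraph T :=
  (g.1 :\: X, [set e in g.2 | e \subset g.1 :\: X]).

Definition dele (T : finType) (g : vgraph T) (e : {set T}) : vgraph T :=
  (g.1, g.2 :\ e).

Lemma tr_del (U T : finType) (eH : rel U) (g : vgraph T) (X M : {set T}) :
  (forall f, is_copy eH (induced g M) f -> forall u, f u \notin X) ->
  ~~ maker_wins eH (del g X) (M :&: (g.1 :\: X)) -> ~~ maker_wins eH g M.
Proof.
move=> hX; apply: contra => /existsP[f hf]; apply/existsP; exists f.
have hfX := hX f hf.
case/and3P: hf => inj /forallP fin /forallP fe.
have fM : forall u, f u \in M :&: (g.1 :\: X).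
  move=> u; have := fin u; rewrite /induced /= !inE => /andP[-> ->].
  by rewrite (negbTE (hfX u)).
apply/and3P; split=> //.
  by apply/forallP=> u; have := fM u; rewrite /induced /= !inE => /andP[-> /andP[-> ->]].
apply/forallP=> u; apply/forallP=> v; apply/implyP=> huv.
have := forallP (fe u) v; rewrite huv /= /induced /= !inE => /andP[-> _] /=.
have sfuv : [set f u; f v] \subset M :&: (g.1 :\: X).
  by rewrite subUset !sub1set !fM.
rewrite sfuv andbT.
apply: subset_trans sfuv _; exact: subsetIr.
Qed.

Lemma tr_vertex (U T : finType) (eH : rel U) (g : vgraph T) x0 (M : {set T}) :
  bad_vertex eH g x0 ->
  ~~ maker_wins eH (del g [set x0]) (M :&: (g.1 :\: [set x0])) -> ~~ maker_wins eH g M.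
Proof.
case/andP=> _ hn; apply: tr_del => f hf u; rewrite inE; apply/eqP=> e.
case/copy_induced: hf => hf _; apply: (negP hn); apply/existsP; exists f.
by rewrite hf /copy_vertices -e imset_f.
Qed.

Lemma tr_edge (U T : finType) (eH : rel U) (g : vgraph T) e0 (M : {set T}) :
  bad_edge eH g e0 ->
  ~~ maker_wins eH (dele g e0) (M :&: g.1) -> ~~ maker_wins eH g M.
Proof.
case/andP=> _ hn; apply: contra => /existsP[f hf]; apply/existsP; exists f.
have [hg _] := copy_induced hf.
case/and3P: hf => inj /forallP fin /forallP fe.
apply/and3P; split=> //.
  by apply/forallP=> u; have := fin u; rewrite /induced /dele /= !inE => /andP[-> ->].
apply/forallP=> u; apply/forallP=> v; apply/implyP=> huv.
have := forallP (fe u) v; rewrite huv /= /induced /dele /= !inE => /andP[-> hs] /=.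
have fuM : forall w, f w \in M by move=> w; have := fin w; rewrite /induced /= inE => /andP[].
have fug : forall w, f w \in g.1 by move=> w; have := fin w; rewrite /induced /= inE => /andP[].
rewrite andbT subUset !sub1set !inE !fuM !fug !andbT.
apply/eqP=> e; apply: (negP hn); apply/existsP; exists f; rewrite hg /=.
by apply/existsP; exists u; apply/existsP; exists v; rewrite huv e eqxx.
Qed.

Lemma tr_set (U T : finType) (eH : rel U) b (g : vgraph T) (A M : {set T}) :
  bad_set eH b g A -> #|M :&: A| <= 1 ->
  ~~ maker_wins eH (del g A) (M :&: (g.1 :\: A)) -> ~~ maker_wins eH g M.
Proof.
case/and4P=> _ _ _ hn hMA; apply: tr_del => f hf u; apply/negP=> fuA.
case/copy_induced: hf => hg fM; apply: (negP hn); apply/existsP; exists f.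
rewrite hg /=; rewrite eqn_leq; apply/andP; split.
  apply: leq_trans hMA; apply: subset_leq_card; apply: setSI.
  by apply/subsetP=> y /imsetP[w _ ->].
by rewrite card_gt0; apply/set0Pn; exists (f u); rewrite inE fuA imset_f.
Qed.

Lemma copy_connect (U T : finType) (eH : rel U) (g : vgraph T) f u v :
  is_copy eH g f -> connect eH u v -> connect (gadj g) (f u) (f v).
Proof.
case/and3P=> _ /forallP fin /forallP fe.
pose e' := [rel x y | connect (gadj g) (f x) (f y)].
have h : subrel eH (connect e').
  move=> x y hxy; apply: connect1; rewrite /e' /=; apply: connect1.
  by rewrite /gadj !fin /=; have := forallP (fe x) y; rewrite hxy.
move/(connect_sub h) => /connectP[p pth ->] {v h}.
elim: p u pth => [|w p IH] u /=; first by move=> _; exact: connect0.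
case/andP=> huw /IH; exact: connect_trans huw.
Qed.

Lemma tr_comp (U T : finType) (eH : rel U) (g : vgraph T) x0 (M : {set T}) :
  (forall x y : U, connect eH x y) ->
  #|M :&: component g x0| < #|U| ->
  ~~ maker_wins eH (del g (component g x0)) (M :&: (g.1 :\: component g x0)) ->
  ~~ maker_wins eH g M.
Proof.
move=> hc hMK; apply: tr_del => f hf u; apply/negP=> fuK.
case/copy_induced: hf => hg fM.
have sub : copy_vertices f \subset M :&: component g x0.
  apply/subsetP=> y /imsetP[w _ ->]; rewrite inE fM /= /component inE.
  have := fuK; rewrite /component inE => /andP[_ c0].
  move: (hg) => /and3P[_ /forallP fin _]; rewrite fin /=.
  exact: connect_trans c0 (copy_connect hg (hc u w)).
have := subset_leq_card sub; rewrite card_imset; last first.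
  by move: (hg) => /and3P[/injectiveP].
by rewrite leqNgt hMK.
Qed.


Lemma cw_lift (U T : finType) (eH : rel U) b (g g' : vgraph T) (Cx Wx : {set T}) :
  g'.1 \subset g.1 -> Cx :|: Wx = g.1 :\: g'.1 ->
  (forall C : {set T}, C \subset g'.1 -> ~~ maker_wins eH g' C ->
     ~~ maker_wins eH g (C :|: Cx)) ->
  forall C W, cw_wwin eH b g' C W -> C \subset g'.1 ->
  cw_wwin eH b g (C :|: Cx) (W :|: Wx).
Proof.
move=> sV eX tr.
have hfree : forall C W : {set T}, free g (C :|: Cx) (W :|: Wx) = free g' C W.
  move=> C W; apply/setP=> y.
  have ey : (y \in Cx :|: Wx) = (y \in g.1 :\: g'.1) by rewrite eX.
  move: ey; rewrite /free !inE.
  case: (y \in Cx); case: (y \in Wx); case yg: (y \in g.1);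
    case yg': (y \in g'.1) => //= _; rewrite ?andbF ?andbT ?orbT ?orbF //.
  by move: (subsetP sV y); rewrite yg yg' => /(_ isT).
move=> C W h; elim: h => {C W} [C W hf hnw | C W O sO cO _ IH] sC.
  have hfe := hfree C W.
  by apply: cw_end; [rewrite hfe | exact: tr].
have hfe := hfree C W.
apply: (cw_move (O:=O)); first by rewrite hfe.
  exact: cO.
move=> x xO.
have xV : x \in g'.1 by have := subsetP sO x xO; rewrite inE => /andP[].
have := IH x xO; rewrite subUset sub1set xV sC => /(_ isT).

by rewrite -setUA setUAC.
Qed.

Lemma cw_phase (U T : finType) (eH : rel U) b (g : vgraph T) (X : {set T})
  (Inv : {set T} -> {set T} -> Prop) :
  X \subset g.1 ->
  (forall C W : {set T}, Inv C W -> C :|: W \subset X -> ~~ (X \subset C :|: W) ->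
     exists O : {set T}, [/\ O \subset X :\: (C :|: W), 0 < #|O| <= b.+1 &
        forall x, x \in O -> Inv (x |: C) (W :|: (O :\ x))]) ->
  (forall C W : {set T}, Inv C W -> C :|: W = X -> cw_wwin eH b g C W) ->
  forall n (C W : {set T}), #|X :\: (C :|: W)| < n -> Inv C W -> C :|: W \subset X ->
  cw_wwin eH b g C W.
Proof.
move=> sX hO hend; elim=> // n IH C W hn hI sCW.
case: (boolP (X \subset C :|: W)) => hX.
  by apply: hend => //; apply/eqP; rewrite eqEsubset sCW.
have [O [sO cO hOx]] := hO _ _ hI sCW hX.
apply: (cw_move (O:=O)) => //.
  apply: subset_trans sO _; apply/subsetP=> y; rewrite !inE => /andP[-> /(subsetP sX) ->].
  by rewrite andbT.
move=> x xO; apply: IH; last 2 first.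
- exact: hOx.
  have sOX : O \subset X by apply: subset_trans sO (subsetDl _ _).
  move: sCW; rewrite !subUset sub1set => /andP[-> ->].
  by rewrite (subsetP sOX) // (subset_trans (subsetDl O [set x]) sOX).
have: X :\: (x |: C :|: (W :|: O :\ x)) \proper X :\: (C :|: W).
  apply/properP; split.
    by apply: setDS; apply/subsetP=> y; rewrite !inE; case/orP=> ->; rewrite ?orbT.
  exists x; first exact: subsetP sO x xO.
  by rewrite !inE eqxx.
move/proper_card; lia.
Qed.


Lemma mb_step (U T : finType) (eH : rel U) b (g g' : vgraph T)
  (Inv : {set T} -> {set T} -> Prop) :
  0 < b -> g'.1 \subset g.1 ->
  (forall M B B' : {set T}, Inv M B -> B \subset B' -> Inv M B') ->
  (forall (M B : {set T}) x, Inv M B -> x \in g'.1 -> Inv (x |: M) B) ->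
  (forall (M B : {set T}) x, Inv M B -> x \in free g M B -> x \notin g'.1 ->
     exists D : {set T}, [/\ D \subset free g (x |: M) B, #|D| <= b &
        forall B' : {set T}, D :|: B \subset B' -> Inv (x |: M) B']) ->
  (forall M B : {set T}, Inv M B -> ~~ maker_wins eH g' (M :&: g'.1) -> ~~ maker_wins eH g M) ->
  (forall B : {set T}, Inv set0 B) ->
  (mb_bwin_maker_turn eH b g' set0 set0 -> mb_bwin_maker_turn eH b g set0 set0) /\
  (mb_bwin_breaker_turn eH b g' set0 set0 -> mb_bwin_breaker_turn eH b g set0 set0).
Proof.
move=> b0 sV invB invM invR tr i0.
have [hM hB _] := mb_sim b0 sV invB invM invR tr (ltnSn #|free g set0 set0|).
rewrite set0I in hM hB; split=> h.
  exact: (hM set0).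
by apply: (hB set0) => //.
Qed.

Lemma cw_small (U T : finType) (eH : rel U) b (g g' : vgraph T) :
  g'.1 \subset g.1 -> #|g.1 :\: g'.1| <= b.+1 ->
  (forall M : {set T}, #|M :&: (g.1 :\: g'.1)| <= 1 ->
     ~~ maker_wins eH g' (M :&: g'.1) -> ~~ maker_wins eH g M) ->
  cw_wwin eH b g' set0 set0 -> cw_wwin eH b g set0 set0.
Proof.
move=> sV cX tr h0.
set X := g.1 :\: g'.1.
pose Inv := fun C W : {set T} => (C = set0 /\ W = set0) \/ (X \subset C :|: W /\ #|C| <= 1).
have hX : forall y, y \in X -> y \notin g'.1 by move=> y; rewrite inE => /andP[].
apply: (@cw_phase U T eH b g X Inv (subsetDl _ _) _ _ (#|X|.+1)).
- move=> C W [[-> ->]|[hs _]] _ hn; last by rewrite hs in hn.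
  exists X; split.
  + by rewrite setU0 setD0.
  + rewrite cX andbT card_gt0; apply/set0Pn.
    by case/subsetPn: hn => y yX _; exists y.
  + move=> x xX; right; split; last by rewrite setU0 cards1.
    by apply/subsetP=> y yX; rewrite !inE; case: eqP => //= _; move: yX; rewrite inE.
- move=> C W hI eCW.
  have cC : #|C| <= 1 by case: hI => [[-> _]|[]]; rewrite ?cards0.
  have sCX : C \subset X by rewrite -eCW subsetUl.
  have := @cw_lift U T eH b g g' C W sV eCW.
  move=> hl; have := hl _ set0 set0 h0 (sub0set _); rewrite !set0U; apply.
  clear hl.
  move=> C' sC' hnw; apply: tr.
    apply: leq_trans cC; apply: subset_leq_card; apply/subsetP=> y.
    rewrite !inE => /andP[/orP[yC'|yC] yX] //.
    by move: (hX y); rewrite inE yX (subsetP sC') // => /(_ isT).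
  have -> : (C' :|: C) :&: g'.1 = C'; last done.
  apply/setP=> y; rewrite !inE; case yC': (y \in C').
    by rewrite (subsetP sC').
  case yC: (y \in C) => //=.
  by apply/negbTE; apply: hX; exact: subsetP sCX y yC.
- by rewrite set0U setD0.
- by left.
- by rewrite set0U sub0set.
Qed.


Definition wins3 (U T : finType) (eH : rel U) b (g g' : vgraph T) :=
  [/\ mb_bwin_maker_turn eH b g' set0 set0 -> mb_bwin_maker_turn eH b g set0 set0,
      mb_bwin_breaker_turn eH b g' set0 set0 -> mb_bwin_breaker_turn eH b g set0 set0
    & cw_wwin eH b g' set0 set0 -> cw_wwin eH b g set0 set0].

Lemma setDDself (T : finType) (A X : {set T}) : A :\: (A :\: X) = A :&: X.
Proof. by apply/setP=> y; rewrite !inE; case: (y \in A); case: (y \in X). Qed.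

Lemma card0_le (T : finType) n : #|@set0 T| <= n.
Proof. by rewrite cards0. Qed.

Lemma step_vertex (U T : finType) (eH : rel U) b (g : vgraph T) x0 :
  0 < b -> bad_vertex eH g x0 -> wins3 eH b g (del g [set x0]).
Proof.
move=> b0 hbad.
have [h1 h2] := @mb_step U T eH b g (del g [set x0]) (fun _ _ => True) b0 (subsetDl _ _)
  (fun _ _ _ _ _ => I) (fun _ _ _ _ _ => I)
  (fun M B x _ _ _ => ex_intro _ set0 (And3 (sub0set _) (card0_le T b) (fun _ _ => I)))
  (fun M B _ => @tr_vertex U T eH g x0 M hbad) (fun _ => I).
split=> //; apply: cw_small; first exact: subsetDl.
  rewrite /= setDDself; apply: leq_trans (subset_leq_card (subsetIr _ _)) _.
  by rewrite cards1.
by move=> M _; apply: tr_vertex.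
Qed.

Lemma step_edge (U T : finType) (eH : rel U) b (g : vgraph T) e0 :
  0 < b -> bad_edge eH g e0 -> wins3 eH b g (dele g e0).
Proof.
move=> b0 hbad.
have [h1 h2] := @mb_step U T eH b g (dele g e0) (fun _ _ => True) b0 (subxx _)
  (fun _ _ _ _ _ => I) (fun _ _ _ _ _ => I)
  (fun M B x _ _ _ => ex_intro _ set0 (And3 (sub0set _) (card0_le T b) (fun _ _ => I)))
  (fun M B _ => @tr_edge U T eH g e0 M hbad) (fun _ => I).
split=> //; apply: cw_small; first exact: subxx.
  by rewrite /= setDv cards0.
by move=> M _; apply: tr_edge.
Qed.

Lemma step_set (U T : finType) (eH : rel U) b (g : vgraph T) (A : {set T}) :
  0 < b -> bad_set eH b g A -> wins3 eH b g (del g A).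
Proof.
move=> b0 hbad.
have [sA c2 cA _] := and4P hbad.
pose Inv := fun M B : {set T} => (M :&: A = set0) \/ (#|M :&: A| <= 1 /\ A \subset M :|: B).
have P1 : forall M B, Inv M B -> #|M :&: A| <= 1.
  by move=> M B [->|[]]; rewrite ?cards0.
have hB : forall M B B' : {set T}, Inv M B -> B \subset B' -> Inv M B'.
  move=> M B B'; rewrite /Inv => [[h|[c s]]] sB; [by left | right; split=> //].
  exact: subset_trans s (setUS _ sB).
have hM : forall (M B : {set T}) x, Inv M B -> x \in (del g A).1 -> Inv (x |: M) B.
  move=> M B x hI; rewrite /= inE /Inv => /andP[xA _].
  have -> : (x |: M) :&: A = M :&: A.
    by rewrite setIUl; have -> : [set x] :&: A = set0; [apply/setP=> y; rewrite !inE;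
       apply/negP=> /andP[/eqP -> ]; exact/negP | rewrite set0U].
  case: hI => [h|[c s]]; [by left | right; split=> //].
  exact: subset_trans s (setSU _ (subsetUr _ _)).
have hR : forall (M B : {set T}) x, Inv M B -> x \in free g M B -> x \notin (del g A).1 ->
     exists D : {set T}, [/\ D \subset free g (x |: M) B, #|D| <= b &
        forall B' : {set T}, D :|: B \subset B' -> Inv (x |: M) B'].
  move=> M B x hI xf; rewrite /= inE negb_and negbK.
  have xg : x \in g.1 by move: xf; rewrite inE => /andP[].
  rewrite xg orbF => xA.
  case: hI => [MA0|[_ s]]; last first.
    by exfalso; move: xf; rewrite inE => /andP[/negP[]]; exact: subsetP s x xA.
  exists (A :&: free g (x |: M) B); split.
  + exact: subsetIr.
  + have : A :&: free g (x |: M) B \subset A :\ x.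
      apply/subsetP=> y; rewrite !inE => /andP[yA /andP[hn _]]; rewrite yA andbT.
      by apply: contraNneq hn => ->; rewrite eqxx.
    move/subset_leq_card; move: (cardsD1 x A); rewrite xA; lia.
  + move=> B' sB'; rewrite /Inv; right; split.
      have -> : (x |: M) :&: A = [set x].
        rewrite setIUl MA0 setU0; apply/setP=> y; rewrite !inE.
        by case: eqP => // ->; rewrite xA.
      by rewrite cards1.
    apply/subsetP=> y yA; rewrite inE.
    case: (boolP (y \in x |: M)) => //= yxM.
    case: (boolP (y \in B)) => yB; first exact: subsetP (subset_trans (subsetUr _ _) sB') y yB.
    apply: (subsetP sB'); rewrite !inE yA /=.
    move: yxM; rewrite !inE negb_or => /andP[h1 h2].
    by rewrite (negbTE h1) (negbTE h2) (negbTE yB) (subsetP sA).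
have htr : forall M B : {set T}, Inv M B -> ~~ maker_wins eH (del g A) (M :&: (del g A).1) -> ~~ maker_wins eH g M.
  move=> M B hI; apply: tr_set hbad (P1 _ _ hI).
have h0 : forall B : {set T}, Inv set0 B.
  by move=> B; rewrite /Inv; left; rewrite set0I.
have [h1 h2] := @mb_step U T eH b g (del g A) Inv b0 (subsetDl _ _) hB hM hR htr h0.
split=> //; apply: cw_small; first exact: subsetDl.
  by rewrite /= setDDself (setIidPr sA).
move=> M hM0; apply: tr_set hbad _.
by rewrite /= setDDself (setIidPr sA) in hM0.
Qed.


Lemma ar1 b m c h : b.+1 * m <= c -> c <= b.+1 * (h - 1) -> 0 < h -> m < h.
Proof.
move=> h1 h2 h0; have := leq_trans h1 h2; rewrite leq_pmul2l //; lia.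
Qed.

Lemma ar2 b m c h : b.+1 * m <= c -> c < b.+1 * (h - 1) -> m.+1 < h.
Proof.
move=> h1 h2; have := leq_ltn_trans h1 h2; rewrite ltn_pmul2l //; lia.
Qed.

Lemma comp_sub (T : finType) (g : vgraph T) x : component g x \subset g.1.
Proof. by apply/subsetP=> y; rewrite inE => /andP[]. Qed.

Lemma step_comp (U T : finType) (eH : rel U) b (g : vgraph T) x0 :
  (forall x y : U, connect eH x y) -> 0 < b ->
  in_small_component U b g x0 -> wins3 eH b g (del g (component g x0)).
Proof.
move=> hc b0 /andP[x0g cK].
have sK := comp_sub g x0.
have x0K : x0 \in component g x0 by rewrite inE x0g connect0.
have trK := fun M => @tr_comp U T eH g x0 M hc.
set K := component g x0 in sK cK x0K trK *.
clearbody K.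
set h := #|U|.
have h1 : 0 < h - 1.
  have : 0 < b.+1 * (h - 1) by apply: leq_trans cK; rewrite card_gt0; apply/set0Pn; exists x0.
  by rewrite muln_gt0.
have h0 : 0 < h by lia.
pose Inv := fun M B : {set T} => (b.+1 * #|M :&: K| <= #|K :&: (M :|: B)|) \/
                                 (K \subset M :|: B /\ #|M :&: K| < h).
have P1 : forall M B, Inv M B -> #|M :&: K| < h.
  move=> M B [c|[]] //; apply: ar1 c _ h0.
  apply: leq_trans cK; apply: subset_leq_card; exact: subsetIl.
have hB : forall M B B' : {set T}, Inv M B -> B \subset B' -> Inv M B'.
  move=> M B B'; rewrite /Inv => [[c|[c s]]] sB.
    left; apply: leq_trans c _; apply: subset_leq_card; apply: setIS; exact: setUS.
  right; split=> //; exact: subset_trans c (setUS _ sB).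
have hM : forall (M B : {set T}) x, Inv M B -> x \in (del g K).1 -> Inv (x |: M) B.
  move=> M B x hI; rewrite /= inE /Inv => /andP[xK _].
  have -> : (x |: M) :&: K = M :&: K.
    rewrite setIUl; have -> : [set x] :&: K = set0; last by rewrite set0U.
    apply/setP=> y; rewrite in_setI in_set1 in_set0; apply/negP=> /andP[/eqP -> ]; exact/negP.
  case: hI => [c|[c s]]; [left | right; split=> //].
    apply: leq_trans c _; apply: subset_leq_card; apply: setIS; apply: setSU; exact: subsetUr.
  exact: subset_trans c (setSU _ (subsetUr _ _)).
have hR : forall (M B : {set T}) x, Inv M B -> x \in free g M B -> x \notin (del g K).1 ->
     exists D : {set T}, [/\ D \subset free g (x |: M) B, #|D| <= b &
        forall B' : {set T}, D :|: B \subset B' -> Inv (x |: M) B'].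
  move=> M B x hI xf; rewrite /= inE negb_and negbK.
  have xg : x \in g.1 by move: xf; rewrite inE => /andP[].
  have xMB : x \notin M :|: B by move: xf; rewrite inE => /andP[].
  rewrite xg orbF => xK.
  case: hI => [c|[s _]]; last first.
    by exfalso; move/negP: xMB; apply; exact: subsetP s x xK.
  set F := K :&: free g (x |: M) B.
  have key : forall D : {set T}, D \subset F -> forall B' : {set T}, D :|: B \subset B' ->
      [/\ #|(x |: M) :&: K| = #|M :&: K|.+1,
          #|K :&: (M :|: B)| + #|D|.+1 <= #|K :&: ((x |: M) :|: B')| &
          #|K :&: (M :|: B)| < #|K|].
    move=> D sD B' sB'.
    have DxMB : forall y, y \in D -> (y != x) && (y \notin M :|: B).
      move=> y /(subsetP sD); rewrite !inE => /andP[_ /andP[]].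
      by case: (y == x); case: (y \in M); case: (y \in B).
    have xD : x \notin D by apply/negP=> /DxMB; rewrite eqxx.
    split.
    - have -> : (x |: M) :&: K = x |: (M :&: K).
        by rewrite setIUl; congr (_ :|: _); apply/setP=> y; rewrite !inE;
           case: eqP => // ->; rewrite xK.
      rewrite cardsU1 inE; move: xMB; rewrite inE negb_or => /andP[/negbTE -> _].
      by rewrite add1n.
    - have sub : (K :&: (M :|: B)) :|: (x |: D) \subset K :&: ((x |: M) :|: B').
        rewrite subUset; apply/andP; split.
          by apply: setIS; apply: setUSS; [exact: subsetUr | apply: subset_trans sB'; exact: subsetUr].
        rewrite subUset sub1set !inE xK eqxx /=.
        apply/subsetP=> y yD; rewrite !inE.
        have := subsetP sD y yD; rewrite inE => /andP[-> _] /=.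
        by rewrite (subsetP sB') ?orbT // inE yD.
      have := subset_leq_card sub; rewrite cardsU.
      have -> : (K :&: (M :|: B)) :&: (x |: D) = set0.
        apply/setP=> y; rewrite !inE; apply/negP=> /andP[/andP[_ yMB] /orP[/eqP yx|yD]].
          by move: xMB; rewrite -yx inE yMB.
        by have := DxMB y yD; rewrite inE yMB andbF.
      by rewrite cards0 subn0 cardsU1 xD add1n.
    - apply: proper_card; apply/properP; split; first exact: subsetIl.
      by exists x => //; rewrite inE (negbTE xMB) andbF.
  case: (leqP b #|F|) => hbF.
    have [D [sD cD]] := exists_card_sub hbF.
    exists D; split; first exact: subset_trans sD (subsetIr _ _).
      by rewrite cD.
    move=> B' sB'; have [e1 e2 _] := key D sD B' sB'; left.
    rewrite e1; rewrite cD in e2; nia.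
  exists F; split; [exact: subsetIr | exact: ltnW |].
  move=> B' sB'; have [e1 e2 e3] := key F (subxx _) B' sB'; right; split.
    apply/subsetP=> y yK; case: (boolP (y \in (x |: M) :|: B)).
      by apply: (subsetP (setUS _ (subset_trans (subsetUr F B) sB'))).
    move=> ynot; rewrite inE (subsetP sB') ?orbT //; rewrite inE; apply/orP; left.
    by rewrite /F in_setI yK /free in_setD ynot (subsetP sK).
  rewrite e1; apply: ar2 c _.
  by apply: leq_trans cK.
have htr : forall M B : {set T}, Inv M B -> ~~ maker_wins eH (del g K) (M :&: (del g K).1) -> ~~ maker_wins eH g M.
  move=> M B hI; apply: trK (P1 _ _ hI).
have i0 : forall B : {set T}, Inv set0 B.
  by move=> B; rewrite /Inv; left; rewrite set0I cards0 muln0.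
have [w1 w2] := @mb_step U T eH b g (del g K) Inv b0 (subsetDl _ _) hB hM hR htr i0.
split=> // hw.
pose Inv2 := fun C W : {set T} => (b.+1 * #|C| <= #|C :|: W|) \/
                                  (K \subset C :|: W /\ #|C| < h).
apply: (@cw_phase U T eH b g K Inv2 sK _ _ (#|K|.+1)); last 3 first.
- by rewrite set0U setD0.
- by rewrite /Inv2; left; rewrite cards0 muln0.
- by rewrite set0U sub0set.
- move=> C W [c|[s _]] sCW hn; last by rewrite s in hn.
  set R := K :\: (C :|: W).
  have rpos : 0 < #|R|.
    rewrite card_gt0; apply/set0Pn; case/subsetPn: hn => y yK yn; exists y.
    by rewrite inE yK yn.
  have [O [sO cO]] := @exists_card_sub T R (minn b.+1 #|R|) (geq_minr _ _).
  exists O; split=> //.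
    rewrite cO; lia.
  move=> x xO.
  have xR := subsetP sO x xO.
  have xCW : x \notin C :|: W by move: xR; rewrite inE => /andP[].
  have eU : x |: C :|: (W :|: O :\ x) = (C :|: W) :|: O.
    apply/setP=> y; rewrite !inE; case: (eqVneq y x) => [->|_] /=.
      by rewrite xO !orbT.
    by rewrite orbA.
  have dis : (C :|: W) :&: O = set0.
    apply/setP=> y; rewrite !inE; apply/negP=> /andP[yCW yO].
    by have := subsetP sO y yO; rewrite in_setD in_setU yCW.
  have cU : #|x |: C :|: (W :|: O :\ x)| = #|C :|: W| + #|O|.
    by rewrite eU cardsU dis cards0 subn0.
  have cC : #|x |: C| = #|C|.+1.
    by rewrite cardsU1; move: xCW; rewrite inE negb_or => /andP[/negbTE -> _].
  have cK' : #|C :|: W| + #|R| = #|K|.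
    by rewrite /R cardsD (setIidPr sCW); have := subset_leq_card sCW; lia.
  rewrite /Inv2 cU cC.
  case: (leqP b.+1 #|R|) => hbR.
    left; move: cO; rewrite (minn_idPl hbR) => ->; nia.
  right; split.
    have eOR : O = R.
      by apply/eqP; rewrite eqEcard sO cO (minn_idPr (ltnW hbR)) leqnn.
    rewrite eU eOR; apply/subsetP=> y yK; rewrite !inE.
    by case: (y \in C); case: (y \in W); rewrite //= yK.
  apply: ar2 c _; apply: leq_trans cK; lia.
- move=> C W hI eCW.
  have cCh : #|C| < h.
    case: hI => [c|[_ //]]; apply: ar1 c _ h0; rewrite eCW; exact: cK.
  have sCK : C \subset K by rewrite -eCW subsetUl.
  have eX : C :|: W = g.1 :\: (del g K).1 by rewrite /= setDDself (setIidPr sK).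
  have := @cw_lift U T eH b g (del g K) C W (subsetDl _ _) eX.
  move=> hl; have := hl _ set0 set0 hw (sub0set _); rewrite !set0U; apply.
  move=> C' sC' hnw; apply: trK.
    apply: leq_ltn_trans cCh; apply: subset_leq_card; apply/subsetP=> y.
    rewrite !inE => /andP[/orP[yC'|yC] yK] //.
    by move: (subsetP sC' y yC'); rewrite /= inE yK.
  have -> : (C' :|: C) :&: (g.1 :\: K) = C'; last done.
  apply/setP=> y; rewrite in_setI in_setU; case yC': (y \in C').
    by rewrite /= (subsetP sC').
  case yC: (y \in C) => //=.
  by rewrite in_setD (subsetP sCK).
Qed.


Lemma copy_sub (U T : finType) (eH : rel U) (S g : vgraph T) f :
  subgraph S g -> is_copy eH S f -> is_copy eH g f.
Proof.
case/andP=> s1 s2 /and3P[inj /forallP fin /forallP fe]; apply/and3P; split=> //.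
  by apply/forallP=> u; apply: (subsetP s1).
apply/forallP=> u; apply/forallP=> v; apply/implyP=> huv.
by apply: (subsetP s2); have := forallP (fe u) v; rewrite huv.
Qed.

Lemma copy_in (U T : finType) (eH : rel U) (S : vgraph T) f :
  is_copy eH S f -> copy_vertices f \subset S.1.
Proof.
by case/and3P=> _ /forallP fin _; apply/subsetP=> y /imsetP[u _ ->].
Qed.

Lemma subgraph_trans (T : finType) (a b c : vgraph T) :
  subgraph a b -> subgraph b c -> subgraph a c.
Proof.
by case/andP=> h1 h2 /andP[h3 h4]; rewrite /subgraph (subset_trans h1 h3) (subset_trans h2 h4).
Qed.

Lemma stable_wf (U T : finType) (eH : rel U) b (S : vgraph T) :
  stable eH b S -> wf_graph S.
Proof. by case/and5P. Qed.

Lemma sub_del (T : finType) (S g : vgraph T) (X : {set T}) :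
  wf_graph S -> subgraph S g -> [disjoint S.1 & X] -> subgraph S (del g X).
Proof.
move=> /forallP wS /andP[s1 s2] dis.
have s1' : S.1 \subset g.1 :\: X.
  apply/subsetP=> y yS; rewrite inE (subsetP s1) // andbT.
  by rewrite (disjointFr dis yS).
rewrite /subgraph /= s1' /=; apply/subsetP=> e eS; rewrite inE (subsetP s2) //=.
have := wS e; rewrite eS /= => /andP[_ h]; exact: subset_trans h s1'.
Qed.

Lemma wf_del (T : finType) (g : vgraph T) (X : {set T}) :
  wf_graph g -> wf_graph (del g X).
Proof.
move=> /forallP w; apply/forallP=> e; apply/implyP; rewrite /= inE => /andP[eg es].
by have := w e; rewrite eg /= => /andP[-> _].
Qed.

Lemma wf_dele (T : finType) (g : vgraph T) e0 :
  wf_graph g -> wf_graph (dele g e0).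
Proof.
move=> /forallP w; apply/forallP=> e; apply/implyP; rewrite /= inE => /andP[_ eg].
by have := w e; rewrite eg.
Qed.

Lemma dis_vertex (U T : finType) (eH : rel U) b (S g : vgraph T) x :
  stable eH b S -> subgraph S g -> bad_vertex eH g x -> [disjoint S.1 & [set x]].
Proof.
case/and5P=> _ /forallP nbv _ _ _ sSg /andP[_ hn].
rewrite disjoint_sym disjoints1; apply/negP=> xS.
have := nbv x; rewrite /bad_vertex xS /= negbK => /existsP[f /andP[hf hx]].
by apply: (negP hn); apply/existsP; exists f; rewrite (copy_sub sSg hf).
Qed.

Lemma dis_edge (U T : finType) (eH : rel U) b (S g : vgraph T) e :
  stable eH b S -> subgraph S g -> bad_edge eH g e -> e \notin S.2.
Proof.
case/and5P=> _ _ /forallP nbe _ _ sSg /andP[_ hn].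
apply/negP=> eS.
have := nbe e; rewrite /bad_edge eS /= negbK => /existsP[f /andP[hf hx]].
by apply: (negP hn); apply/existsP; exists f; rewrite (copy_sub sSg hf).
Qed.

Lemma dis_set (U T : finType) (eH : rel U) b (S g : vgraph T) (A : {set T}) :
  stable eH b S -> subgraph S g -> bad_set eH b g A -> [disjoint S.1 & A].
Proof.
case/and5P=> _ /forallP nbv _ /forallP nbs _ sSg /and4P[sA c2 cA hn].
rewrite -setI_eq0; case: (set_0Vmem (S.1 :&: A)) => [-> //|[y yI]]; exfalso.
have cvI : forall f, is_copy eH S f ->
    copy_vertices f :&: A = copy_vertices f :&: (S.1 :&: A).
  move=> f hf; apply/setP=> z; rewrite !inE.
  by case zc: (z \in copy_vertices f); rewrite //= (subsetP (copy_in hf)).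
case: (leqP 2 #|S.1 :&: A|) => c2'.
  have := nbs (S.1 :&: A); rewrite /bad_set subsetIl c2' /=.
  have -> : #|S.1 :&: A| <= b.+1.
    by apply: leq_trans cA; apply: subset_leq_card; exact: subsetIr.
  rewrite /= negbK => /existsP[f /andP[hf h1]].
  by apply: (negP hn); apply/existsP; exists f; rewrite (copy_sub sSg hf) cvI.
have yS : y \in S.1 by move: yI; rewrite inE => /andP[].
have := nbv y; rewrite /bad_vertex yS /= negbK => /existsP[f /andP[hf hy]].
apply: (negP hn); apply/existsP; exists f; rewrite (copy_sub sSg hf) cvI //=.
rewrite eqn_leq; apply/andP; split.
  apply: leq_trans (subset_leq_card (subsetIr _ _)) _; lia.
by rewrite card_gt0; apply/set0Pn; exists y; rewrite inE hy.
Qed.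

Lemma dis_comp (U T : finType) (eH : rel U) b (S g : vgraph T) x :
  stable eH b S -> subgraph S g -> in_small_component U b g x ->
  [disjoint S.1 & component g x].
Proof.
case/and5P=> _ _ _ _ /forallP nsc sSg /andP[xg cK].
have [s1 s2] := andP sSg.
rewrite -setI_eq0; case: (set_0Vmem (S.1 :&: component g x)) => [-> //|[y]]; rewrite inE => /andP[yS yK]; exfalso.
have := nsc y; rewrite /in_small_component yS /= -ltnNge => hlt.
have : component S y \subset component g x.
  apply/subsetP=> z; rewrite !inE => /andP[zS cyz].
  rewrite (subsetP s1) //=.
  move: yK; rewrite inE => /andP[_ cxy]; apply: connect_trans cxy _.
  apply: connect_sub cyz => u v huv; apply: connect1.
  by move: huv; rewrite /gadj => /and3P[hu hv he]; rewrite !(subsetP s1) //= (subsetP s2).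
move/subset_leq_card => h; have := leq_trans h cK; by rewrite leqNgt hlt.
Qed.


Lemma core_eq (U T : finType) (eH : rel U) b (G g : vgraph T) :
  stable eH b g -> subgraph g G ->
  (forall S, subgraph S G -> stable eH b S -> subgraph S g) -> core eH b G = g.
Proof.
move=> hs sg hall; transitivity (g.1, g.2); last by case: g {hs sg hall}.
rewrite /core; congr pair; apply/eqP; rewrite eqEsubset; apply/andP; split.
- by apply/bigcupsP=> S /andP[h1 h2]; case/andP: (hall S h1 h2).
- by apply: (bigcup_sup g (P := fun S => subgraph S G && stable eH b S)); rewrite sg hs.
- by apply/bigcupsP=> S /andP[h1 h2]; case/andP: (hall S h1 h2).
- by apply: (bigcup_sup g (P := fun S => subgraph S G && stable eH b S)); rewrite sg hs.
Qed.

Lemma del_ok (U T : finType) (eH : rel U) b (G g : vgraph T) (X : {set T}) y :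
  wf_graph g -> subgraph g G ->
  (forall S, subgraph S G -> stable eH b S -> [disjoint S.1 & X]) ->
  (forall S, subgraph S G -> stable eH b S -> subgraph S g) ->
  y \in X -> y \in g.1 ->
  [/\ #|(del g X).1| + #|(del g X).2| < #|g.1| + #|g.2|, wf_graph (del g X),
      subgraph (del g X) G
    & forall S, subgraph S G -> stable eH b S -> subgraph S (del g X)].
Proof.
move=> wg sg hdis hall yX yg; split.
- have h1 : #|(del g X).1| < #|g.1|.
    apply: proper_card; apply/properP; split; first exact: subsetDl.
    by exists y => //; rewrite inE yX.
  have h2 : #|(del g X).2| <= #|g.2|.
    by apply: subset_leq_card; apply/subsetP=> e; rewrite inE => /andP[].
  lia.
- exact: wf_del.
- case/andP: sg => s1 s2; apply/andP; split.
    exact: subset_trans (subsetDl _ _) s1.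
  by apply: subset_trans _ s2; apply/subsetP=> e; rewrite inE => /andP[].
- move=> S h1 h2; apply: sub_del; [exact: stable_wf h2 | exact: hall | exact: hdis].
Qed.

Lemma core_ind (U T : finType) (eH : rel U) b (G : vgraph T) (Win : vgraph T -> Prop) :
  (forall g, wf_graph g ->
     [/\ forall x, bad_vertex eH g x -> Win (del g [set x]) -> Win g,
         forall e, bad_edge eH g e -> Win (dele g e) -> Win g,
         forall A, bad_set eH b g A -> Win (del g A) -> Win g
       & forall x, in_small_component U b g x -> Win (del g (component g x)) -> Win g]) ->
  Win (core eH b G) ->
  forall n (g : vgraph T), #|g.1| + #|g.2| < n -> wf_graph g -> subgraph g G ->
  (forall S, subgraph S G -> stable eH b S -> subgraph S g) -> Win g.
Proof.
move=> hstep hcore; elim=> // n IH g hn wg sg hall.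
case hst: (stable eH b g); first by rewrite -(core_eq hst sg hall).
have [s1 s2 s3 s4] := hstep g wg.
move: hst; rewrite /stable wg /=.
case hA: [forall x, ~~ bad_vertex eH g x]; last first.
  move=> _; move/negbT: hA => /forallPn[x]; rewrite negbK => hx.
  have xg : x \in g.1 by case/andP: hx.
  have [d1 d2 d3 d4] := @del_ok U T eH b G g [set x] x wg sg
    (fun S h1 h2 => dis_vertex h2 (hall S h1 h2) hx) hall (set11 x) xg.
  apply: (s1 x hx); apply: IH d2 d3 d4; lia.
case hB: [forall e, ~~ bad_edge eH g e]; last first.
  move=> _; move/negbT: hB => /forallPn[e]; rewrite negbK => he.
  have eg : e \in g.2 by case/andP: he.
  apply: (s2 e he); apply: (IH _ _ (wf_dele e wg)).
  + have : #|g.2 :\ e| < #|g.2|.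
      by apply: proper_card; apply/properP; split; [exact: subsetDl | exists e; rewrite ?inE ?eqxx].
    move=> h; change (#|g.1| + #|g.2 :\ e| < n); lia.
  + case/andP: sg => t1 t2; rewrite /subgraph /= t1 /=.
    exact: subset_trans (subsetDl _ _) t2.
  + move=> S h1 h2; have := hall S h1 h2; case/andP=> t1 t2.
    rewrite /subgraph /= t1 /=; apply/subsetP=> f fS; rewrite in_setD1 (subsetP t2) // andbT.
    by apply/eqP=> ef; move: (dis_edge h2 (hall S h1 h2) he); rewrite -ef fS.
case hC: [forall A, ~~ bad_set eH b g A]; last first.
  move=> _; move/negbT: hC => /forallPn[A]; rewrite negbK => hA'.
  have [sA c2 _ _] := and4P hA'.
  have [y yA] : exists y, y \in A.
    by apply/set0Pn; rewrite -card_gt0; apply: leq_trans c2.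
  have [d1 d2 d3 d4] := @del_ok U T eH b G g A y wg sg
    (fun S h1 h2 => dis_set h2 (hall S h1 h2) hA') hall yA (subsetP sA y yA).
  apply: (s3 A hA'); apply: IH d2 d3 d4; lia.
move=> /= /forallPn[x]; rewrite negbK => hx.
have xg : x \in g.1 by case/andP: hx.
have xK : x \in component g x by rewrite inE xg connect0.
have [d1 d2 d3 d4] := @del_ok U T eH b G g (component g x) x wg sg
  (fun S h1 h2 => dis_comp h2 (hall S h1 h2) hx) hall xK xg.
apply: (s4 x hx); apply: IH d2 d3 d4; lia.
Qed.

Unset Implicit Arguments.

Theorem mainTheorem12 (T U : finType) (G : vgraph T) (eH : rel U) (b : nat) :
  wf_graph G -> symmetric eH -> irreflexive eH ->
  (forall x y : U, connect eH x y) -> 0 < b ->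
  (* Maker-Breaker, Maker moves first *)
  (mb_bwin_maker_turn eH b (core eH b G) set0 set0 ->
     mb_bwin_maker_turn eH b G set0 set0) /\
  (* Maker-Breaker, Breaker moves first *)
  (mb_bwin_breaker_turn eH b (core eH b G) set0 set0 ->
     mb_bwin_breaker_turn eH b G set0 set0) /\
  (* Client-Waiter *)
  (cw_wwin eH b (core eH b G) set0 set0 -> cw_wwin eH b G set0 set0).
Proof.
move=> wG _ _ hc b0.
have key : forall Win : vgraph T -> Prop,
    (forall g g', wins3 eH b g g' -> Win g' -> Win g) -> Win (core eH b G) -> Win G.
  move=> Win hw hcore.
  apply: (@core_ind U T eH b G Win _ hcore (#|G.1| + #|G.2|).+1 G) => //.
    move=> g wg; split=> y hy; apply: hw.
    - exact: step_vertex.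
    - exact: step_edge.
    - exact: step_set.
    - exact: step_comp.
  by rewrite /subgraph !subxx.
split; [|split].
- apply: (key (fun g => mb_bwin_maker_turn eH b g set0 set0)).
  by move=> g g' [h1 h2 h3].
- apply: (key (fun g => mb_bwin_breaker_turn eH b g set0 set0)).
  by move=> g g' [h1 h2 h3].
- apply: (key (fun g => cw_wwin eH b g set0 set0)).
  by move=> g g' [h1 h2 h3].
Qed.
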